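(* Let $(\mathcal{N},\mathcal{E})$ be a connected graph with $N$ nodes, $E$ edges and incidence matrix $\mathbf{B}$, with nodes numbered so that those outside a nonempty strict subset $\mathcal{N}_0\subset\mathcal{N}$ come first, and partition $\mathbf{B}^\top=[\mathbf{B}_1^\top~\mathbf{B}_0^\top]$ accordingly ($\mathbf{B}_0$ = rows indexed by $\mathcal{N}_0$). Let $w_e\in\mathbb{C}\setminus\{0\}$, $\mathbf{W}=\mathrm{diag}(\{w_e\}_{e\in\mathcal{E}})$, and let $\mathbf{P}$ be a real full-column-rank matrix with $\mathrm{range}(\mathbf{P})=\mathrm{null}(\mathbf{B}_0)$; assume $\mathbf{P}^\top\mathbf{W}\mathbf{P}$ and $\mathbf{B}_0\mathbf{W}^{-1}\mathbf{B}_0^\top$ are invertible (e.g. if $\mathrm{Re}(w_e)\ge0$, $\mathrm{Im}(w_e)\ge0$ for all $e$). Define the Laplacian $\widetilde{\mathbf{W}}=\mathbf{B}\mathbf{W}^{-1}\mathbf{B}^\top=\begin{bmatrix}\widetilde{\mathbf{W}}_{11}&\widetilde{\mathbf{W}}_{10}\\ \widetilde{\mathbf{W}}_{10}^\top&\widetilde{\mathbf{W}}_{00}\end{bmatrix}$, with $\widetilde{\mathbf{W}}_{00}$ the block indexed by $\mathcal{N}_0$. Then $$\mathbf{B}_1\mathbf{P}(\mathbf{P}^\top\mathbf{W}\mathbf{P})^{-1}\mathbf{P}^\top\mathbf{B}_1^\top=\widetilde{\mathbf{W}}\setminus\widetilde{\mathbf{W}}_{00}:=\widetilde{\mathbf{W}}_{11}-\widetilde{\mathbf{W}}_{10}\widetilde{\mathbf{W}}_{00}^{-1}\widetilde{\mathbf{W}}_{10}^\top.$$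 In particular, for edge resistances $r_e\ge0$, inductances $\ell_e>0$ and $\omega>0$, with $\mathbf{R}=\mathrm{diag}(\{r_e\})$, $\mathbf{L}=\mathrm{diag}(\{\ell_e\})$: (a) taking $\mathbf{W}=\mathbf{R}+\jmath\omega\mathbf{L}$ gives $\mathbf{B}_1\mathbf{P}(\mathbf{P}^\top(\mathbf{R}+\jmath\omega\mathbf{L})\mathbf{P})^{-1}\mathbf{P}^\top\mathbf{B}_1^\top=\mathbf{Y}_{11}-\mathbf{Y}_{10}\mathbf{Y}_{00}^{-1}\mathbf{Y}_{10}^\top$ (the Kron-reduced admittance matrix), where $\mathbf{Y}=\mathbf{B}(\mathbf{R}+\jmath\omega\mathbf{L})^{-1}\mathbf{B}^\top$ is partitioned in the same way; (b) taking $\mathbf{W}=\mathbf{L}$ gives $\mathbf{B}_1\mathbf{P}(\mathbf{P}^\top\mathbf{L}\mathbf{P})^{-1}\mathbf{P}^\top\mathbf{B}_1^\top=\widetilde{\mathbf{L}}_{11}-\widetilde{\mathbf{L}}_{10}\widetilde{\mathbf{L}}_{00}^{-1}\widetilde{\mathbf{L}}_{10}^\top$, where $\widetilde{\mathbf{L}}=\mathbf{B}\mathbf{L}^{-1}\mathbf{B}^\top$ is partitioned in the same way.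
   Context: Each edge is given an arbitrary orientation $e=(m,n)$. The incidence matrix $\mathbf{B}\in\{0,\pm1\}^{N\times E}$ has entries $B_{k,e}=1$ if $k=m$, $B_{k,e}=-1$ if $k=n$, for $e=(m,n)$, and $B_{k,e}=0$ otherwise. $^\top$ denotes the (non-conjugate) transpose and $\jmath=\sqrt{-1}$. *)

(* Defs.v *)
(* Complex numbers are R[i] (mathcomp-real-closed) over a
   real closed field R (the real numbers being the motivating instance). *)
From HB Require Import structures.
From mathcomp Require Import all_boot all_order all_algebra.
From mathcomp Require Export complex.
Set Implicit Arguments. Unset Strict Implicit. Unset Printing Implicit Defensive.
Import Order.TTheory GRing.Theory Num.Theory.
Local Open Scope ring_scope.

(* A graph on node set 'I_N with edge set 'I_E; edge e is oriented as
   e = (src e, dst e). *)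

Definition incidence (K : ringType) (N E : nat) (src dst : 'I_E -> 'I_N)
  : 'M[K]_(N, E) :=
  \matrix_(k < N, e < E)
    (if k == src e then 1 else if k == dst e then -1 else 0).

Definition simple_graph (N E : nat) (src dst : 'I_E -> 'I_N) : Prop :=
  (forall e, src e != dst e) /\
  (forall e e', (src e == src e' /\ dst e == dst e') \/
                (src e == dst e' /\ dst e == src e') -> e = e').

Definition adj (N E : nat) (src dst : 'I_E -> 'I_N) : rel 'I_N :=
  fun u v => [exists e, ((src e == u) && (dst e == v)) ||
                        ((src e == v) && (dst e == u))].

Definition graph_connected (N E : nat) (src dst : 'I_E -> 'I_N) : Prop :=
  forall u v : 'I_N, connect (adj src dst) u v.

(* Schur complement  A \ A_00 := A_11 - A_10 A_00^{-1} A_10^T  for the block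
   decomposition of A : 'M_(n1 + n0) (last n0 indices = N_0). *)
Definition schur_compl (K : comUnitRingType) (n1 n0 : nat)
  (A : 'M[K]_(n1 + n0)) : 'M[K]_n1 :=
  ulsubmx A - ursubmx A *m invmx (drsubmx A) *m (ursubmx A)^T.

Definition cplx (R : rcfType) (m n : nat) (A : 'M[R]_(m, n)) : 'M[R[i]]_(m, n) :=
  map_mx (fun x => x%:C%C) A.

(* Main.v *)
Require Import Defs.
From HB Require Import structures.
From mathcomp Require Import all_boot all_order all_algebra.
From mathcomp Require Import complex.
From mathcomp Require Import ring lra.
Import Order.TTheory GRing.Theory Num.Theory.
Local Open Scope ring_scope.
Lemma B0_free (F : fieldType) n1 n0 E (src dst : 'I_E -> 'I_(n1+n0)) :
  (0 < n1)%N -> simple_graph src dst -> graph_connected src dst ->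
  forall u : 'rV[F]_n0, u *m dsubmx (incidence F src dst) = 0 -> u = 0.
Proof.
move=> hn1 [hne _] hc u hu.
set B := incidence F src dst.
set z := row_mx (0 : 'rV[F]_n1) u.
have hz : z *m B = 0.
  by rewrite -[B]vsubmxK mul_row_col mul0mx add0r hu.
have hedge : forall e, z 0 (src e) = z 0 (dst e).
  move=> e; move/matrixP: hz => /(_ 0 e) H0; rewrite !mxE in H0.
  move: H0.
  have -> : \sum_j z 0 j * B j e = z 0 (src e) - z 0 (dst e).
    have -> : \sum_j z 0 j * B j e =
       \sum_j ((if j == src e then z 0 j else 0) - (if j == dst e then z 0 j else 0)).
      apply: eq_bigr => j _; rewrite /B !mxE.
      case: (eqVneq j (src e)) => [->|hj].
        by rewrite (negbTE (hne e)) mulr1 subr0.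
      case: (eqVneq j (dst e)) => [->|hj2]; first by rewrite mulrN1 sub0r.
      by rewrite mulr0 subr0.
    by rewrite sumrB -!big_mkcond /= !big_pred1_eq.
  by move=> H; apply/eqP; rewrite -subr_eq0 H.
set y0 := lshift n0 (Ordinal hn1).
have cl : closed (adj src dst) [pred x | z 0 x == z 0 y0].
  move=> x y /existsP [ed /orP [/andP [/eqP <- /eqP <-]|/andP [/eqP <- /eqP <-]]];
    by rewrite !inE hedge.
apply/rowP => j; rewrite mxE.
have := closed_connect cl (hc y0 (rshift n1 j)).
rewrite !inE eqxx /z row_mxEr row_mxEl mxE => /esym/eqP.
by [].
Qed.

Section Cx.
Variable R : rcfType.
Local Notation C := R[i].

Lemma quad_zero E (c : C) (w v : 'rV[C]_E) :
  (forall e, 0 < complex.Re (c * w 0 e)) ->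
  v *m diag_mx w *m (map_mx conjc v)^T = 0 -> v = 0.
Proof.
move=> hw h.
have h1 : \sum_e (v 0 e * w 0 e * (v 0 e)^*%C) = 0.
  move/matrixP: h => /(_ 0 0) H0; rewrite mul_mx_diag !mxE in H0.
  by apply: etrans H0; apply: eq_bigr => e _; rewrite !mxE.
have h2 : \sum_e (complex.Re (c * w 0 e) * ((complex.Re (v 0 e))^+2 + (complex.Im (v 0 e))^+2)) = 0.
  have := congr1 (fun z => complex.Re (c * z)) h1; rewrite /= mulr0 mulr_sumr raddf_sum.
  move=> H; transitivity (complex.Re (0:C)); last by []. rewrite -H. apply: eq_bigr => e _.
  rewrite (_ : c * (v 0 e * w 0 e * (v 0 e)^*%C) = (c * w 0 e) * (v 0 e * (v 0 e)^*%C)); last by ring.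
  case: (v 0 e) => a b; case: (c * w 0 e) => p q /=.
  rewrite !expr2 /=; ring.
have h3 := psumr_eq0P _ h2.
apply/rowP => e; rewrite mxE.
have : complex.Re (c * w 0 e) * (complex.Re (v 0 e) ^+ 2 + complex.Im (v 0 e) ^+ 2) == 0.
  apply/eqP/h3 => // i _; apply: mulr_ge0; first exact: ltW.
  by rewrite addr_ge0 // sqr_ge0.
rewrite mulf_eq0 (gt_eqF (hw e)) /= paddr_eq0 ?sqr_ge0 // !sqrf_eq0.
by case: (v 0 e) => a b /= /andP [/eqP -> /eqP ->].
Qed.
End Cx.
Lemma main_identity (F : fieldType) n1 n0 E k (B1 : 'M[F]_(n1,E)) (B0 : 'M[F]_(n0,E))
  (Pc : 'M_(E,k)) (w : 'rV_E) :
  (forall e, w 0 e != 0) ->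
  B0 *m Pc = 0 ->
  (forall d : 'rV_E, d *m B0^T = 0 -> exists y : 'rV_k, d = y *m Pc^T) ->
  (Pc^T *m diag_mx w *m Pc) \in unitmx ->
  (B0 *m invmx (diag_mx w) *m B0^T) \in unitmx ->
  B1 *m Pc *m invmx (Pc^T *m diag_mx w *m Pc) *m Pc^T *m B1^T
   = schur_compl (col_mx B1 B0 *m invmx (diag_mx w) *m (col_mx B1 B0)^T).
Proof.
move=> hw hBP hker hT hS.
set W := diag_mx w; set Wi := invmx W.
set T := Pc^T *m W *m Pc; set S := B0 *m Wi *m B0^T.
have Wu : W \in unitmx.
  by rewrite unitmxE det_diag unitfE; apply/prodf_neq0 => e _; exact: hw.
have WiT : Wi^T = Wi by rewrite /Wi trmx_inv tr_diag_mx.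
have PB : Pc^T *m B0^T = 0 by rewrite -trmx_mul hBP trmx0.
have eS0 : invmx S *m (B0 *m (Wi *m B0^T)) = 1%:M.
  by rewrite (mulmxA B0) -/S mulVmx.
have eS1 : forall m (Z : 'M_(n0, m)), invmx S *m (B0 *m (Wi *m (B0^T *m Z))) = Z.
  by move=> m Z; rewrite (mulmxA Wi) (mulmxA B0) (mulmxA (invmx S)) eS0 mul1mx.
have eT0 : invmx T *m (Pc^T *m (W *m Pc)) = 1%:M.
  by rewrite (mulmxA Pc^T) -/T mulVmx.
have eW : forall m (Z : 'M_(E, m)), Wi *m (W *m Z) = Z.
  by move=> m Z; rewrite mulKmx.
set X := Wi - Wi *m B0^T *m invmx S *m B0 *m Wi.
set Y := Pc *m invmx T *m Pc^T.
have XY : X = Y.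
  apply/eqP; rewrite -subr_eq0; apply/eqP.
  have D1 : (X - Y) *m B0^T = 0.
    rewrite mulmxBl /X /Y mulmxBl -!mulmxA eS0 mulmx1 subrr PB !mulmx0 subr0 //.
  have D2 : (X - Y) *m (W *m Pc) = 0.
    rewrite mulmxBl /X /Y mulmxBl -!mulmxA eW hBP !mulmx0 subr0 eT0 mulmx1 subrr //.
  apply/row_matrixP => i; rewrite row0.
  have r1 : row i (X - Y) *m B0^T = 0 by rewrite -row_mul D1 row0.
  have [y hy] := hker _ r1.
  have r2 : row i (X - Y) *m (W *m Pc) = 0 by rewrite -row_mul D2 row0.
  have yT : y *m T = 0 by rewrite /T -r2 hy !mulmxA.
  have y0 : y = 0 by rewrite -(mulmxK hT y) yT mul0mx.
  by rewrite hy y0 mul0mx.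
rewrite /schur_compl tr_col_mx mul_col_mx mul_col_row block_mxKul block_mxKur block_mxKdr -/S.
rewrite !trmx_mul trmxK WiT.
have -> : B1 *m Pc *m invmx T *m Pc^T *m B1^T = B1 *m Y *m B1^T by rewrite /Y !mulmxA.
rewrite -XY /X mulmxBr mulmxBl -!mulmxA //.
Qed.
Section S.
Variable R : rcfType.
Local Notation C := R[i].

Lemma cplxE m n (A : 'M[R]_(m,n)) : cplx A = map_mx (real_complex R) A.
Proof. by []. Qed.

Lemma wz_eq (a b o : R) : (a%:C + ('i%C * (o%:C)%C) * b%:C)%C = (a +i* (o * b))%C :> C.
Proof. by simpc. Qed.

Lemma Re_mi (a b : R) : complex.Re (- 'i%C * (a +i* b)%C) = b.
Proof. by simpc. Qed.

Lemma Re_iinv (a b : R) : 0 < b -> 0 < complex.Re ('i%C * (a +i* b)%C^-1).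
Proof.
move=> hb; simpc => /=; apply: divr_gt0 => //.
by apply: ltr_wpDl; rewrite ?sqr_ge0 // exprn_gt0.
Qed.

Lemma Re_real (a : R) : complex.Re (1 * (a%:C)%C) = a.
Proof. by simpc. Qed.

Lemma Re_realinv (a : R) : complex.Re (1 * ((a%:C)%C)^-1) = a^-1.
Proof. by rewrite mul1r -fmorphV. Qed.

Lemma test m n (A : 'M[R]_(m,n)) : \rank (cplx A) = \rank A.
Proof. by rewrite cplxE mxrank_map. Qed.
Lemma test2 m n (A : 'M[R]_(m,n)) : kermx (cplx A) = cplx (kermx A).
Proof. by rewrite !cplxE map_kermx. Qed.
Lemma test3 m n (A : 'M[R]_(m,n)) : map_mx conjc (cplx A) = cplx A.
Proof. by apply/matrixP => i j; rewrite !mxE conjc_real. Qed.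

Lemma invmx_diag n (w : 'rV[C]_n) : (forall e, w 0 e != 0) ->
  invmx (diag_mx w) = diag_mx (\row_e (w 0 e)^-1).
Proof.
move=> hw.
have Wu : diag_mx w \in unitmx.
  by rewrite unitmxE det_diag unitfE; apply/prodf_neq0 => e _; exact: hw.
have H : diag_mx w *m diag_mx (\row_e (w 0 e)^-1) = 1%:M.
  rewrite mulmx_diag; apply/matrixP => i j; rewrite !mxE.
  by case: eqP => [->|_]; rewrite ?mulr1n ?mulr0n // mulfV.
by rewrite -[RHS](mulKmx Wu) H mulmx1.
Qed.

Lemma unitT E k (P : 'M[R]_(E,k)) (c : C) (w : 'rV[C]_E) :
  \rank P = k -> (forall e, 0 < complex.Re (c * w 0 e)) ->
  (cplx P)^T *m diag_mx w *m cplx P \in unitmx.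
Proof.
move=> hr hw.
rewrite -row_free_unit -kermx_eq0; apply/eqP/row_matrixP => i; rewrite row0.
set u := row i _.
have hu : u *m ((cplx P)^T *m diag_mx w *m cplx P) = 0 by rewrite -row_mul mulmx_ker row0.
have hv : u *m (cplx P)^T = 0.
  apply: (@quad_zero R E c w) => //.
  rewrite map_mxM -map_trmx test3 trmx_mul trmxK.
  by rewrite !mulmxA -(mulmxA u) -(mulmxA u) hu !mul0mx.
have rf : row_free (cplx P)^T by rewrite /row_free mxrank_tr test hr.
by apply: (row_free_inj rf); rewrite hv mul0mx.
Qed.

Lemma unitS n0 E (B0 : 'M[R]_(n0,E)) (c : C) (w : 'rV[C]_E) :
  (forall e, w 0 e != 0) ->
  (forall u : 'rV[C]_n0, u *m cplx B0 = 0 -> u = 0) ->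
  (forall e, 0 < complex.Re (c * (w 0 e)^-1)) ->
  cplx B0 *m invmx (diag_mx w) *m (cplx B0)^T \in unitmx.
Proof.
move=> hw hfree hc.
rewrite invmx_diag //.
rewrite -row_free_unit -kermx_eq0; apply/eqP/row_matrixP => i; rewrite row0.
set u := row i _.
have hu : u *m (cplx B0 *m diag_mx (\row_e (w 0 e)^-1) *m (cplx B0)^T) = 0
  by rewrite -row_mul mulmx_ker row0.
apply: hfree.
apply: (@quad_zero R E c (\row_e (w 0 e)^-1)).
  by move=> e; rewrite mxE.
rewrite map_mxM test3 trmx_mul.
by rewrite !mulmxA -(mulmxA u) -(mulmxA u) hu !mul0mx.
Qed.

End S.

Theorem proposition1
  (R : rcfType) (n1 n0 E : nat)
  (src dst : 'I_E -> 'I_(n1 + n0))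
  (hn1 : (0 < n1)%N) (hn0 : (0 < n0)%N)
  (hsimple : simple_graph src dst)
  (hconn : graph_connected src dst)
  (k : nat) (P : 'M[R]_(E, k))
  (hrank : \rank P = k)
  (hrange : forall x : 'cV[R]_E,
      (exists y : 'cV[R]_k, x = P *m y) <->
      dsubmx (incidence R src dst) *m x = 0) :
  let B := incidence R[i] src dst in
  let B1 := usubmx B in
  let B0 := dsubmx B in
  let Pc := cplx P in
  (* general statement *)
  (forall w : 'rV[R[i]]_E,
     (forall e, w 0 e != 0) ->
     let W := diag_mx w in
     (Pc^T *m W *m Pc) \in unitmx ->
     (B0 *m invmx W *m B0^T) \in unitmx ->
     B1 *m Pc *m invmx (Pc^T *m W *m Pc) *m Pc^T *m B1^T
       = schur_compl (B *m invmx W *m B^T))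
  /\
  (* special cases (a) and (b) *)
  (forall (r l : 'rV[R]_E) (omega : R),
     (forall e, 0 <= r 0 e) -> (forall e, 0 < l 0 e) -> 0 < omega ->
     let Rm := cplx (diag_mx r) in
     let Lm := cplx (diag_mx l) in
     let Z := Rm + ('i%C * (omega%:C)%C) *: Lm in
     (B1 *m Pc *m invmx (Pc^T *m Z *m Pc) *m Pc^T *m B1^T
        = schur_compl (B *m invmx Z *m B^T))
     /\
     (B1 *m Pc *m invmx (Pc^T *m Lm *m Pc) *m Pc^T *m B1^T
        = schur_compl (B *m invmx Lm *m B^T))).
Proof.
move=> B B1 B0 Pc.
set B0R := dsubmx (incidence R src dst).
have hB : B = cplx (incidence R src dst).
  apply/matrixP => i j; rewrite /B /cplx !mxE.
  by case: ifP => _; [|case: ifP => _]; rewrite ?rmorphN1 ?rmorph1 ?rmorph0.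
have hB0 : B0 = cplx B0R by rewrite /B0 hB; apply/matrixP => i j; rewrite !mxE.
have hBP : B0R *m P = 0.
  apply/matrixP => i j.
  have h : B0R *m (row j P^T)^T = 0.
    apply/hrange; exists (row j 1%:M)^T.
    by rewrite -[P *m _]trmxK trmx_mul trmxK -row_mul mul1mx.
  move/matrixP: h => /(_ i 0) h; rewrite !mxE in h.
  rewrite !mxE; apply: etrans h; apply: eq_bigr => l _; by rewrite !mxE.
have hBPc : B0 *m Pc = 0 by rewrite hB0 /Pc !cplxE -map_mxM hBP map_mx0.
have hkerR : (kermx B0R^T <= P^T)%MS.
  apply/row_subP => i; set rr := row i _.
  have : B0R *m rr^T = 0 by rewrite -[B0R]trmxK -trmx_mul /rr -row_mul mulmx_ker row0 trmx0.
  by move/hrange => [y hy]; rewrite -[rr]trmxK hy trmx_mul submxMl.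
have hker : forall d : 'rV_E, d *m B0^T = 0 -> exists y : 'rV_k, d = y *m Pc^T.
  move=> d hd.
  have : (d <= Pc^T)%MS.
    apply: (submx_trans (_ : (d <= kermx B0^T)%MS)); first exact/sub_kermxP.
    by rewrite hB0 /Pc !cplxE !map_trmx -map_kermx map_submx.
  by case/submxP => y ->; exists y.
have hfree : forall u : 'rV_n0, u *m cplx B0R = 0 -> u = 0.
  move=> u hu; apply: (@B0_free _ n1 n0 E src dst hn1 hsimple hconn).
  by rewrite -hB0 in hu.
have hgen : forall w : 'rV[R[i]]_E, (forall e, w 0 e != 0) ->
    Pc^T *m diag_mx w *m Pc \in unitmx ->
    B0 *m invmx (diag_mx w) *m B0^T \in unitmx ->
    B1 *m Pc *m invmx (Pc^T *m diag_mx w *m Pc) *m Pc^T *m B1^T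
      = schur_compl (B *m invmx (diag_mx w) *m B^T).
  move=> w hw hT hS.
  have -> : B = col_mx B1 B0 by rewrite vsubmxK.
  exact: main_identity.
split.
  by move=> w hw W hT hS; exact: hgen.
move=> r l omega hr hl ho Rm Lm Z.
pose wz := \row_e (((r 0 e)%:C + ('i * omega%:C) * (l 0 e)%:C)%C) : 'rV[R[i]]_E.
have hZ : Z = diag_mx wz.
  apply/matrixP => i j; rewrite /Z /Rm /Lm /wz !mxE.
  by case: eqP => _; rewrite ?mulr1n ?mulr0n ?rmorph0 ?mulr0 ?addr0.
have hwz : forall e, wz 0 e = (r 0 e +i* (omega * l 0 e))%C.
  by move=> e; rewrite mxE wz_eq.
have hpos : forall e, 0 < omega * l 0 e by move=> e; rewrite mulr_gt0.
have hwz0 : forall e, wz 0 e != 0.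
  move=> e; rewrite hwz; apply/negP => /eqP /(congr1 (@complex.Im R)) /= H.
  by have := hpos e; rewrite H ltxx.
have hL : Lm = diag_mx (\row_e ((l 0 e)%:C)%C).
  apply/matrixP => i j; rewrite /Lm !mxE.
  by case: eqP => _; rewrite ?mulr1n ?mulr0n ?rmorph0.
have hl0 : forall e, (\row_e ((l 0 e)%:C)%C : 'rV[R[i]]_E) 0 e != 0.
  move=> e; rewrite mxE; apply/negP => /eqP /(congr1 (@complex.Re R)) /= H.
  by have := hl e; rewrite H ltxx.
split.
  rewrite hZ; apply: hgen => //.
    apply: (@unitT R E k P (- 'i)%C) => // e; rewrite hwz Re_mi; exact: hpos.
  rewrite hB0; apply: (@unitS R n0 E B0R 'i%C) => // e.
  by rewrite hwz; apply: Re_iinv; exact: hpos.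
rewrite hL; apply: hgen => //.
  by apply: (@unitT R E k P 1) => // e; rewrite mxE Re_real.
rewrite hB0; apply: (@unitS R n0 E B0R 1) => // e.
by rewrite mxE Re_realinv invr_gt0.
Qed.
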